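(* For all $n\in\mathbb{N}$, $\mathrm{SL}_n(\mathcal{A}(\bm{p}))=\mathrm{E}_n(\mathcal{A}(\bm{p}))$; that is, every $n\times n$ matrix over $\mathcal{A}(\bm{p})$ with determinant $\varepsilon$ is a finite product of elementary matrices.
   Context: Fix $\bm{p}:\mathbb{N}_0\to(0,\infty)$ with $\lim_{n\to\infty}\bm{p}(n)^{1/n}=\infty$. For an entire function $f$ write $f(z)=\sum_{n\ge0}\widehat f(n)z^n$. $\mathcal{A}(\bm{p})$ is the set of entire functions $f$ with $\sup_{n\ge 0}\bm{p}(n)|\widehat f(n)|<\infty$, with pointwise addition and scalar multiplication and the weighted Hadamard product $(f\ast g)(z)=\sum_{n\ge0}\bm{p}(n)\widehat f(n)\widehat g(n)z^n$; it is a commutative unital ring with unit $\varepsilon(z)=\sum_{n\ge0}\frac{z^n}{\bm{p}(n)}$. Determinants and matrix products are computed using $\ast$. $\mathrm{SL}_n(\mathcal{A}(\bm{p}))$ is the group of $n\times n$ matrices with determinant $\varepsilon$; an elementary matrix is $I_n+\alpha\mathbf{e}_{ij}$ with $i\ne j$, $\alpha\in\mathcal{A}(\bm{p})$, where $I_n$ is diagonal with entries $\varepsilon$ and $\mathbf{e}_{ij}$ has $\varepsilon$ in position $(i,j)$ and $0$ elsewhere; $\mathrm{E}_n(\mathcal{A}(\bm{p}))$ is the subgroup generated by elementary matrices. *)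

(* Defs.v *)
From HB Require Import structures.
From mathcomp Require Import all_boot all_order all_algebra all_fingroup.
From mathcomp Require Import all_classical all_reals all_analysis.
From mathcomp Require Import complex.
From Stdlib Require List.
Set Implicit Arguments. Unset Strict Implicit. Unset Printing Implicit Defensive.
Import Order.TTheory GRing.Theory Num.Theory.
Local Open Scope ring_scope.
Local Open Scope complex_scope.

Section APdefs.
Variable R : realType.
Local Notation C := (R[i]).

(* An entire function f is represented by its Taylor coefficient sequence
   n |-> \hat f(n); a complex sequence is the coefficient sequence of an entire
   function iff |a_n| r^n is bounded for every r > 0 (Cauchy--Hadamard). *)
Definition coef_entire (f : nat -> C) : Prop :=
  forall r : R, 0 < r -> exists M : R, forall n, `|f n| * (r ^+ n)%:C <= M%:C.

Definition inA (p : nat -> R) (f : nat -> C) : Prop :=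
  coef_entire f /\ exists M : R, forall n, (p n)%:C * `|f n| <= M%:C.

Definition hadd (f g : nat -> C) : nat -> C := fun k => f k + g k.
Definition hzero : nat -> C := fun _ => 0.
Definition hscale (c : C) (f : nat -> C) : nat -> C := fun k => c * f k.
Definition hmul (p : nat -> R) (f g : nat -> C) : nat -> C :=
  fun k => (p k)%:C * f k * g k.
(* the unit epsilon(z) = sum z^n / p(n) *)
Definition eps (p : nat -> R) : nat -> C := fun k => ((p k)^-1)%:C.

Definition hmat (n : nat) := 'I_n -> 'I_n -> (nat -> C).

Definition hdet (p : nat -> R) (n : nat) (A : hmat n) : nat -> C :=
  \big[hadd/hzero]_(s : 'S_n)
     hscale ((-1) ^+ s) (\big[hmul p/eps p]_(i < n) A i (s i)).

Definition hmulmx (p : nat -> R) (n : nat) (A B : hmat n) : hmat n :=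
  fun i j => \big[hadd/hzero]_(k < n) hmul p (A i k) (B k j).

Definition hId (p : nat -> R) (n : nat) : hmat n :=
  fun i j => if i == j then eps p else hzero.

Definition hE (p : nat -> R) (n : nat) (i j : 'I_n) : hmat n :=
  fun k l => if (k == i) && (l == j) then eps p else hzero.

Definition helem (p : nat -> R) (n : nat) (i j : 'I_n) (alpha : nat -> C) : hmat n :=
  fun k l => hadd (hId p k l) (hmul p alpha (hE p i j k l)).

Definition inSLn (p : nat -> R) (n : nat) (A : hmat n) : Prop :=
  (forall i j, inA p (A i j)) /\ hdet p A = eps p.

Definition elem_ok (p : nat -> R) (n : nat) (e : 'I_n * 'I_n * (nat -> C)) : Prop :=
  e.1.1 != e.1.2 /\ inA p e.2.

Definition inElem (p : nat -> R) (n : nat) (A : hmat n) : Prop :=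
  exists es : seq ('I_n * 'I_n * (nat -> C)),
    (forall e, List.In e es -> elem_ok p e) /\
    A = foldr (fun e M => hmulmx p (helem p e.1.1 e.1.2 e.2) M) (@hId p n) es.

End APdefs.

(* Main.v *)
Require Import Defs.
From HB Require Import structures.
From mathcomp Require Import all_boot all_order all_algebra all_fingroup.
From mathcomp Require Import all_classical all_reals all_analysis.
From mathcomp Require Import complex.
From mathcomp Require Import ring.
From Stdlib Require List.
Import Order.TTheory GRing.Theory Num.Theory.
Set Implicit Arguments. Unset Strict Implicit. Unset Printing Implicit Defensive.

Section CoreS.
Local Open Scope ring_scope.
Variable F : numFieldType.

Definition elemmx n (a b : 'I_n) (c : F) : 'M[F]_n := 1%:M + c *: delta_mx a b.

Definition prodE n (es : seq ('I_n * 'I_n * (nat -> F))) (k : nat) : 'M[F]_n :=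
  foldr (fun e N => elemmx e.1.1 e.1.2 (e.2 k) *m N) 1%:M es.

Definition bseq (c : nat -> F) := exists B, forall k, `|c k| <= B.
Definition bfam n (M : nat -> 'M[F]_n) := exists B, forall k i j, `|M k i j| <= B.
Definition okE n (e : 'I_n * 'I_n * (nat -> F)) := e.1.1 != e.1.2 /\ bseq e.2.
Definition Dec n (M : nat -> 'M[F]_n) :=
  exists es, (forall e, List.In e es -> okE e) /\ forall k, M k = prodE es k.

Lemma Dec_ext n (M N : nat -> 'M[F]_n) : (forall k, M k = N k) -> Dec N -> Dec M.
Proof. by move=> MN [es [h1 h2]]; exists es; split=> // k; rewrite MN. Qed.

Lemma Dec1 n : Dec (fun _ => (1%:M : 'M[F]_n)).
Proof. by exists [::]; split. Qed.

Lemma prodE_cat n (es1 es2 : seq ('I_n * 'I_n * (nat -> F))) k :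
  prodE (es1 ++ es2) k = prodE es1 k *m prodE es2 k.
Proof.
elim: es1 => [|e es IH] /=; first by rewrite /prodE /= mul1mx.
by rewrite /prodE /= -/(prodE _ _) IH mulmxA.
Qed.

Lemma Dec_mul n (M N : nat -> 'M[F]_n) : Dec M -> Dec N -> Dec (fun k => M k *m N k).
Proof.
move=> [e1 [h1 h1']] [e2 [h2 h2']]; exists (e1 ++ e2); split.
  by move=> e He; case: (List.in_app_or _ _ _ He) => H; [apply: h1|apply: h2].
by move=> k; rewrite prodE_cat h1' h2'.
Qed.

Lemma Dec_elem n (a b : 'I_n) c : a != b -> bseq c -> Dec (fun k => elemmx a b (c k)).
Proof.
move=> ab bc; exists [:: (a, b, c)]; split.
  by move=> e [<-|[]]; split.
by move=> k; rewrite /prodE /= mulmx1.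
Qed.

Lemma Dec_cancelL n (E E' M : nat -> 'M[F]_n) : Dec E -> Dec E' ->
  (forall k, E' k *m E k = 1%:M) -> Dec (fun k => E k *m M k) -> Dec M.
Proof.
move=> _ hE' inv hEM; apply: (Dec_ext (N := fun k => E' k *m (E k *m M k))).
  by move=> k; rewrite mulmxA inv mul1mx.
exact: Dec_mul.
Qed.

Lemma Dec_cancelR n (E E' M : nat -> 'M[F]_n) : Dec E -> Dec E' ->
  (forall k, E k *m E' k = 1%:M) -> Dec (fun k => M k *m E k) -> Dec M.
Proof.
move=> _ hE' inv hEM; apply: (Dec_ext (N := fun k => (M k *m E k) *m E' k)).
  by move=> k; rewrite -mulmxA inv mulmx1.
exact: Dec_mul.
Qed.


Lemma deltaL_E n (u v r j : 'I_n) (M : 'M[F]_n) :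
  (delta_mx u v *m M) r j = (r == u)%:R * M v j.
Proof.
rewrite mxE (bigD1 v) //=.
rewrite [delta_mx u v r v]mxE eqxx andbT.
rewrite big1 ?addr0 // => l /negPf lv.
by rewrite mxE lv andbF mul0r.
Qed.

Lemma deltaR_E n (u v r j : 'I_n) (M : 'M[F]_n) :
  (M *m delta_mx u v) r j = (j == v)%:R * M r u.
Proof.
rewrite mxE (bigD1 u) //=.
rewrite [delta_mx u v u j]mxE eqxx /= mulrC.
rewrite big1 ?addr0 // => l /negPf lu.
by rewrite mxE lu mulr0.
Qed.

Lemma elemL_E n (a b r j : 'I_n) c (M : 'M[F]_n) :
  (elemmx a b c *m M) r j = M r j + (r == a)%:R * c * M b j.
Proof.
rewrite /elemmx mulmxDl mul1mx -scalemxAl.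
rewrite [LHS]mxE [X in _ + X]mxE deltaL_E.
by rewrite mulrA (mulrC c).
Qed.

Lemma elemR_E n (a b r j : 'I_n) c (M : 'M[F]_n) :
  (M *m elemmx a b c) r j = M r j + (j == b)%:R * c * M r a.
Proof.
rewrite /elemmx mulmxDr mulmx1 -scalemxAr.
rewrite [LHS]mxE [X in _ + X]mxE deltaR_E.
by rewrite mulrA (mulrC c).
Qed.

Lemma elem_inv n (a b : 'I_n) (c : F) : a != b -> elemmx a b (- c) *m elemmx a b c = 1%:M.
Proof.
move=> ab; rewrite /elemmx mulmxDl mul1mx mulmxDr mulmx1 -scalemxAl -scalemxAr.
rewrite mul_delta_mx_cond eq_sym (negPf ab) mulr0n !scaler0 addr0 scaleNr.
by rewrite addrK.
Qed.

Lemma det_elem n (a b : 'I_n) (c : F) : a != b -> \det (elemmx a b c) = 1.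
Proof.
move=> ab.
pose C := (1%:M + delta_mx a b - delta_mx a a : 'M[F]_n).
rewrite (@determinant_multilinear _ _ _ 1%:M C a 1 c).
- rewrite det1 mulr1 (@determinant_alternate _ _ C a b) ?mulr0 ?addr0 //.
  move=> j; rewrite /C !mxE !eqxx (eq_sym b a) (negPf ab) /=.
  by rewrite (eq_sym a j) (eq_sym b j) addrAC subrr add0r subr0 addr0.
- apply/matrixP => i j; rewrite !mxE !eqxx /=.
  by rewrite (eq_sym a j) addrAC subrr add0r mul1r.
- apply/matrixP => i j; rewrite !mxE.
  have -> : (lift a i == a) = false by rewrite eq_sym (negPf (neq_lift a i)).
  by rewrite /= mulr0 addr0.
- apply/matrixP => i j; rewrite !mxE.
  have -> : (lift a i == a) = false by rewrite eq_sym (negPf (neq_lift a i)).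
  by rewrite /= mulr0 addr0 subr0.
Qed.

Lemma Dec_det n (M : nat -> 'M[F]_n) : Dec M -> forall k, \det (M k) = 1.
Proof.
move=> [es [h1 h2]] k; rewrite h2 {h2}; elim: es h1 => [|e es IH] h1.
  by rewrite /prodE /= det1.
rewrite /prodE /= det_mulmx -/(prodE _ _) IH; last by move=> x hx; apply: h1; right.
by rewrite det_elem ?mulr1 //; case: (h1 e (or_introl erefl)).
Qed.

Definition sumD n (I : finType) (P : pred I) (a b : I -> 'I_n) (c : I -> F) : 'M[F]_n :=
  \sum_(i | P i) c i *: delta_mx (a i) (b i).

Lemma sumD_mul0 n (I : finType) (P : pred I) (a b : I -> 'I_n) (x y : I -> F) :
  (forall i i', P i -> P i' -> b i != a i') -> sumD P a b x *m sumD P a b y = 0.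
Proof.
move=> cr; rewrite /sumD mulmx_suml big1 // => i Pi.
rewrite -scalemxAl mulmx_sumr big1 ?scaler0 // => i' Pi'.
by rewrite -scalemxAr mul_delta_mx_cond (negPf (cr _ _ Pi Pi')) mulr0n !scaler0.
Qed.

Lemma sumDN n (I : finType) (P : pred I) (a b : I -> 'I_n) (c : I -> F) :
  sumD P a b (fun i => - c i) = - sumD P a b c.
Proof. by rewrite /sumD -sumrN; apply: eq_bigr => i _; rewrite scaleNr. Qed.

Lemma nil_inv n (I : finType) (P : pred I) (a b : I -> 'I_n) (c : I -> F) :
  (forall i i', P i -> P i' -> b i != a i') ->
  (1%:M + sumD P a b (fun i => - c i)) *m (1%:M + sumD P a b c) = 1%:M /\
  (1%:M + sumD P a b c) *m (1%:M + sumD P a b (fun i => - c i)) = 1%:M.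
Proof.
move=> cr; rewrite !mulmxDl !mulmxDr !mul1mx !mulmx1 !sumD_mul0 // sumDN !addr0.
by split; [apply: addrK | apply: subrK].
Qed.

Lemma Dec_nil n (I : finType) (P : pred I) (a b : I -> 'I_n) (c : I -> nat -> F) :
  (forall i, P i -> a i != b i) -> (exists B, forall i k, `|c i k| <= B) ->
  (forall i i', P i -> P i' -> b i != a i') ->
  Dec (fun k => 1%:M + sumD P a b (fun i => c i k)).
Proof.
move=> ab [B hB] cr; rewrite /sumD.
elim: (index_enum I) => [|x r IH].
  apply: (Dec_ext (N := fun _ => 1%:M)); last exact: Dec1.
  by move=> k; rewrite big_nil addr0.
case Px: (P x); last first.
  by apply: (Dec_ext (N := fun k => 1%:M + \sum_(i <- r | P i) c i k *: delta_mx (a i) (b i))) => // k; rewrite big_cons Px.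
apply: (Dec_ext (N := fun k => elemmx (a x) (b x) (c x k) *m (1%:M + \sum_(i <- r | P i) c i k *: delta_mx (a i) (b i)))).
  move=> k.
  have h0 : delta_mx (a x) (b x) *m \sum_(i <- r | P i) c i k *: delta_mx (a i) (b i) = 0.
    rewrite mulmx_sumr big1 // => i Pi.
    by rewrite -scalemxAr mul_delta_mx_cond (negPf (cr _ _ Px Pi)) mulr0n !scaler0.
  rewrite big_cons Px /elemmx mulmxDl mul1mx mulmxDr mulmx1 -scalemxAl h0 scaler0 addr0.
  by rewrite (addrC (c x k *: _)) addrA.
apply: Dec_mul => //; apply: Dec_elem; first exact: ab.
by exists B.
Qed.

Lemma Dec_nilL n (I : finType) (P : pred I) (a b : I -> 'I_n) (c : I -> nat -> F) (M : nat -> 'M[F]_n) :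
  (forall i, P i -> a i != b i) -> (exists B, forall i k, `|c i k| <= B) ->
  (forall i i', P i -> P i' -> b i != a i') ->
  Dec (fun k => (1%:M + sumD P a b (fun i => c i k)) *m M k) -> Dec M.
Proof.
move=> ab hB cr hD; have [B hB'] := hB.
apply: (Dec_cancelL (E' := fun k => 1%:M + sumD P a b (fun i => - c i k)) _ _ _ hD).
- exact: Dec_nil.
- apply: (Dec_nil (c := fun i k => - c i k)) => //.
  by exists B => i k; rewrite normrN.
- by move=> k; case: (nil_inv (fun i => c i k) cr).
Qed.

Lemma Dec_nilR n (I : finType) (P : pred I) (a b : I -> 'I_n) (c : I -> nat -> F) (M : nat -> 'M[F]_n) :
  (forall i, P i -> a i != b i) -> (exists B, forall i k, `|c i k| <= B) ->
  (forall i i', P i -> P i' -> b i != a i') ->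
  Dec (fun k => M k *m (1%:M + sumD P a b (fun i => c i k))) -> Dec M.
Proof.
move=> ab hB cr hD; have [B hB'] := hB.
apply: (Dec_cancelR (E' := fun k => 1%:M + sumD P a b (fun i => - c i k)) _ _ _ hD).
- exact: Dec_nil.
- apply: (Dec_nil (c := fun i k => - c i k)) => //.
  by exists B => i k; rewrite normrN.
- by move=> k; case: (nil_inv (fun i => c i k) cr).
Qed.

Lemma sumDL_E n (I : finType) (P : pred I) (a b : I -> 'I_n) (c : I -> F) (M : 'M[F]_n) r j :
  ((1%:M + sumD P a b c) *m M) r j = M r j + \sum_(i | P i) c i * ((r == a i)%:R * M (b i) j).
Proof.
rewrite mulmxDl mul1mx mxE /sumD mulmx_suml summxE; congr (_ + _).
by apply: eq_bigr => i _; rewrite -scalemxAl mxE deltaL_E.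
Qed.

Lemma sumDR_E n (I : finType) (P : pred I) (a b : I -> 'I_n) (c : I -> F) (M : 'M[F]_n) r j :
  (M *m (1%:M + sumD P a b c)) r j = M r j + \sum_(i | P i) c i * ((j == b i)%:R * M r (a i)).
Proof.
rewrite mulmxDr mulmx1 mxE /sumD mulmx_sumr summxE; congr (_ + _).
by apply: eq_bigr => i _; rewrite -scalemxAr mxE deltaR_E.
Qed.

Lemma bfam_mul n (M N : nat -> 'M[F]_n) : bfam M -> bfam N -> bfam (fun k => M k *m N k).
Proof.
move=> [B1 h1] [B2 h2]; exists (n%:R * (B1 * B2)) => k i j.
rewrite mxE (le_trans (ler_norm_sum _ _ _)) //.
have -> : (n%:R * (B1 * B2) : F) = \sum_(l < n) B1 * B2 by rewrite sumr_const card_ord mulr_natl.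
rewrite ler_sum // => l _.
by rewrite normrM ler_pM.
Qed.

Lemma bfam_nil n (I : finType) (P : pred I) (a b : I -> 'I_n) (c : I -> nat -> F) :
  (exists B, forall i k, `|c i k| <= B) ->
  bfam (fun k => 1%:M + sumD P a b (fun i => c i k)).
Proof.
move=> [B hB]; exists (1 + \sum_(i | P i) B) => k r j.
rewrite mxE (le_trans (ler_normD _ _)) // lerD //.
  by rewrite mxE; case: (r == j); rewrite ?normr1 ?normr0.
rewrite /sumD summxE (le_trans (ler_norm_sum _ _ _)) //.
have h1 : \sum_(i | P i) `|c i k * ((r == a i) && (j == b i))%:R| <= \sum_(i | P i) B.
  apply: ler_sum => i _; rewrite normrM; apply: (le_trans _ (hB i k)).
  by case: (_ && _); rewrite ?normr1 ?normr0 ?mulr1 ?mulr0.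
rewrite (le_trans _ h1) //.
by rewrite le_eqVlt; apply/orP; left; apply/eqP; apply: eq_bigr => i _; rewrite !mxE.
Qed.

Lemma bfam_elem n (a b : 'I_n) (c : nat -> F) : bseq c -> bfam (fun k => elemmx a b (c k)).
Proof.
move=> [B hB]; exists (1 + B) => k r j.
rewrite !mxE (le_trans (ler_normD _ _)) // lerD //.
  by case: (r == j); rewrite ?normr1 ?normr0.
by rewrite normrM; apply: (le_trans _ (hB k)); case: (_ && _); rewrite ?normr1 ?normr0 ?mulr1 ?mulr0.
Qed.

Lemma det_bound n (A : 'M[F]_n) (B : F) : 0 <= B -> (forall i j, `|A i j| <= B) ->
  `|\det A| <= #|{: 'S_n}|%:R * B ^+ n.
Proof.
move=> B0 hA.
have h : forall s : 'S_n, `|(-1) ^+ s * \prod_i A i (s i)| <= B ^+ n.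
  move=> s; rewrite normrM normrX normrN1 expr1n mul1r normr_prod.
  have -> : B ^+ n = \prod_(i < n) B by rewrite prodr_const card_ord.
  rewrite ler_prod // => i _.
  by rewrite normr_ge0 hA.
rewrite /determinant (le_trans (ler_norm_sum _ _ _)) //.
by rewrite (le_trans (ler_sum _ (fun s _ => h s))) // sumr_const mulr_natl.
Qed.

Lemma pivot_lb n (B : F) : 0 <= B -> exists2 d : F, 0 < d &
  forall M : 'M[F]_n.+1, (forall i j, `|M i j| <= B) -> \det M = 1 -> exists i, d <= `|M i 0|.
Proof.
move=> B0; set K := 1 + #|{: 'S_n}|%:R * B ^+ n.
have K0 : 0 < K by rewrite ltr_pwDl // mulr_ge0 // exprn_ge0.
have N0 : (0 : F) < (n.+1)%:R by rewrite ltr0n.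
exists ((n.+1)%:R * K)^-1; first by rewrite invr_gt0 mulr_gt0.
move=> M hM dM.
case: (boolP [exists i, ((n.+1)%:R * K)^-1 <= `|M i 0|]) => [/existsP [i hi]|hn]; first by exists i.
exfalso.
have lt1 : forall i, `|M i 0| < ((n.+1)%:R * K)^-1.
  move=> i; move/existsPn: hn => /(_ i) hi.
  by rewrite real_ltNge ?hi ?normr_real ?gtr0_real // invr_gt0 mulr_gt0.
have lt2 : forall i, `|cofactor M i 0| < K.
  move=> i; rewrite /cofactor normrM normrX normrN1 expr1n mul1r.
  rewrite (le_lt_trans (det_bound B0 _)) ?ltr_pwDl //.
  by move=> a b; rewrite !mxE.
have h1 : `|(\adj M *m M) 0 0| = 1 by rewrite mul_adj_mx dM mxE eqxx mulr1n normr1.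
have : `|(\adj M *m M) 0 0| < 1.
  rewrite mxE (le_lt_trans (ler_norm_sum _ _ _)) //.
  have -> : (1 : F) = \sum_(i < n.+1) K * ((n.+1)%:R * K)^-1.
    rewrite sumr_const card_ord -mulr_natl; field.
    by rewrite (gt_eqF K0) /= gt_eqF // ltr_pwDl // ler0n.
  apply: ltr_sum; first by apply/hasP; exists ord0; rewrite ?mem_index_enum.
  move=> i _; rewrite normrM mxE ltr_pM //.
by rewrite h1 ltxx.
Qed.

Lemma Dec_elemL n (a b : 'I_n) (c : nat -> F) (M : nat -> 'M[F]_n) :
  a != b -> bseq c -> Dec (fun k => elemmx a b (c k) *m M k) -> Dec M.
Proof.
move=> ab [B hB] hD.
apply: (Dec_cancelL (E' := fun k => elemmx a b (- c k)) _ _ _ hD).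
- by apply: Dec_elem => //; exists B.
- by apply: Dec_elem => //; exists B => k; rewrite normrN.
- by move=> k; rewrite elem_inv.
Qed.

Lemma Dec_nil_det n (I : finType) (P : pred I) (a b : I -> 'I_n) (c : I -> nat -> F) k :
  (forall i, P i -> a i != b i) -> (exists B, forall i k, `|c i k| <= B) ->
  (forall i i', P i -> P i' -> b i != a i') ->
  \det (1%:M + sumD P a b (fun i => c i k)) = 1.
Proof. by move=> h1 h2 h3; rewrite (Dec_det (Dec_nil h1 h2 h3)). Qed.

Definition liftm n (N : 'M[F]_n) : 'M[F]_n.+1 := \matrix_(i, j)
  match unlift ord0 i, unlift ord0 j with
  | Some a, Some b => N a b | None, None => 1 | _, _ => 0 end.

Lemma liftmE n (N : 'M[F]_n) i j : liftm N (lift ord0 i) (lift ord0 j) = N i j.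
Proof. by rewrite mxE !liftK. Qed.
Lemma liftm00 n (N : 'M[F]_n) : liftm N ord0 ord0 = 1.
Proof. by rewrite mxE unlift_none. Qed.
Lemma liftm0j n (N : 'M[F]_n) j : liftm N ord0 (lift ord0 j) = 0.
Proof. by rewrite mxE unlift_none liftK. Qed.
Lemma liftmi0 n (N : 'M[F]_n) i : liftm N (lift ord0 i) ord0 = 0.
Proof. by rewrite mxE unlift_none liftK. Qed.

Lemma liftm_mul n (A B : 'M[F]_n) : liftm (A *m B) = liftm A *m liftm B.
Proof.
apply/matrixP => i j; rewrite [RHS]mxE big_ord_recl.
case: (unliftP ord0 i) => [i'|] ->; case: (unliftP ord0 j) => [j'|] ->.
- rewrite liftmE liftmi0 mul0r add0r mxE; apply: eq_bigr => l _.
  by rewrite !liftmE.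
- rewrite liftmi0 liftmi0 mul0r add0r big1 // => l _.
  by rewrite liftmi0 mulr0.
- rewrite liftm0j liftm00 mul1r liftm0j add0r big1 // => l _.
  by rewrite liftm0j mul0r.
- rewrite !liftm00 mulr1 big1 ?addr0 // => l _.
  by rewrite liftm0j mul0r.
Qed.

Lemma liftm1 n : liftm (1%:M : 'M[F]_n) = 1%:M.
Proof.
apply/matrixP => i j.
case: (unliftP ord0 i) => [i'|] ->; case: (unliftP ord0 j) => [j'|] ->.
- by rewrite liftmE !mxE (inj_eq (@lift_inj _ ord0)).
- by rewrite liftmi0 mxE.
- by rewrite liftm0j mxE.
- by rewrite liftm00 mxE.
Qed.

Lemma l0nz n (x : 'I_n) : (ord0 == lift ord0 x :> 'I_n.+1) = false.
Proof. by apply/negP => /eqP/(congr1 (@nat_of_ord _)); rewrite lift0. Qed.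
Lemma lnz0 n (x : 'I_n) : (lift ord0 x == ord0 :> 'I_n.+1) = false.
Proof. by rewrite eq_sym l0nz. Qed.

Lemma liftm_elem n (a b : 'I_n) c :
  liftm (elemmx a b c) = elemmx (lift ord0 a) (lift ord0 b) c.
Proof.
apply/matrixP => i j.
case: (unliftP ord0 i) => [i'|] ->; case: (unliftP ord0 j) => [j'|] ->.
- by rewrite liftmE !mxE !(inj_eq (@lift_inj _ ord0)).
- by rewrite liftmi0 !mxE lnz0 andbF mulr0 addr0.
- by rewrite liftm0j !mxE l0nz mulr0 addr0.
- by rewrite liftm00 !mxE l0nz eqxx mulr0 addr0.
Qed.

Lemma Dec_lift n (N : nat -> 'M[F]_n) : Dec N -> Dec (fun k => liftm (N k)).
Proof.
move=> [es [h1 h2]].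
exists (map (fun e => (lift ord0 e.1.1, lift ord0 e.1.2, e.2)) es); split.
  move=> e /List.in_map_iff [e' [<- he']]; case: (h1 e' he') => ne bs.
  by split => //=; rewrite (inj_eq (@lift_inj _ ord0)).
move=> k; rewrite h2 {h1 h2}; elim: es => [|e es IH]; first by rewrite /prodE /= liftm1.
by rewrite /prodE /= -!/(prodE _ _) liftm_mul IH liftm_elem.
Qed.

Lemma det_liftm n (N : 'M[F]_n) : \det (liftm N) = \det N.
Proof.
rewrite (expand_det_row _ ord0) big_ord_recl liftm00 mul1r big1 ?addr0.
  rewrite /cofactor addn0 expr0 mul1r; congr (\det _).
  by apply/matrixP => i j; rewrite !mxE !liftK.
by move=> j _; rewrite liftm0j mul0r.
Qed.

Lemma stage_d n (IH : forall N : nat -> 'M[F]_n, bfam N -> (forall k, \det (N k) = 1) -> Dec N)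
  (M : nat -> 'M[F]_n.+1) : bfam M -> (forall k, \det (M k) = 1) ->
  (forall k, M k ord0 ord0 = 1) -> (forall k i, i != ord0 -> M k i ord0 = 0) -> Dec M.
Proof.
move=> [B hB] hdet h00 hi0.
pose P := (fun j : 'I_n.+1 => j != ord0).
pose a := (fun _ : 'I_n.+1 => (ord0 : 'I_n.+1)).
pose b := (fun j : 'I_n.+1 => j).
pose c := (fun j k => - M k ord0 j).
have h1 : forall i, P i -> a i != b i by move=> i; rewrite /P /a /b eq_sym.
have h2 : exists B, forall i k, `|c i k| <= B by exists B => i k; rewrite normrN.
have h3 : forall i i', P i -> P i' -> b i != a i' by [].
pose N := fun k => \matrix_(i, j) M k (lift ord0 i) (lift ord0 j) : 'M[F]_n.
have eqk : forall k, M k *m (1%:M + sumD P a b (fun i => c i k)) = liftm (N k).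
  move=> k; apply/matrixP => i j; rewrite sumDR_E.
  case: (unliftP ord0 i) => [i'|] ->; case: (unliftP ord0 j) => [j'|] ->.
  - rewrite liftmE mxE big1 ?addr0 // => l _.
    by rewrite /a hi0 ?mulr0 // lnz0.
  - rewrite liftmi0 (hi0 k (lift ord0 i')) ?lnz0 // add0r big1 // => l _.
    by rewrite !mulr0.
  - rewrite liftm0j (bigD1 (lift ord0 j')) ?lnz0 //= big1 ?addr0.
      by rewrite /c /b eqxx h00 mulr1 mulr1 addrN.
    by move=> l /andP [_ hl]; rewrite /b eq_sym (negPf hl) mul0r mulr0.
  - rewrite liftm00 h00 big1 ?addr0 // => l hl.
    by rewrite /b eq_sym (negPf hl) mul0r mulr0.
apply: (Dec_nilR h1 h2 h3).
apply: (Dec_ext (N := fun k => liftm (N k))); first exact: eqk.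
apply: Dec_lift; apply: IH.
  by exists B => k i j; rewrite mxE.
move=> k; rewrite -det_liftm -eqk det_mulmx hdet mul1r.
exact: Dec_nil_det.
Qed.

Lemma stage_c n (IH : forall N : nat -> 'M[F]_n, bfam N -> (forall k, \det (N k) = 1) -> Dec N)
  (M : nat -> 'M[F]_n.+1) : bfam M -> (forall k, \det (M k) = 1) ->
  (forall k, M k ord0 ord0 = 1) -> Dec M.
Proof.
move=> [B hB] hdet h00.
pose P := (fun j : 'I_n.+1 => j != ord0).
pose a := (fun j : 'I_n.+1 => j).
pose b := (fun _ : 'I_n.+1 => (ord0 : 'I_n.+1)).
pose c := (fun j k => - M k j ord0).
have h1 : forall i, P i -> a i != b i by [].
have h2 : exists B, forall i k, `|c i k| <= B by exists B => i k; rewrite normrN.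
have h3 : forall i i', P i -> P i' -> b i != a i' by move=> i i' _; rewrite /b /a eq_sym.
apply: (Dec_nilL h1 h2 h3); apply: stage_d => //.
- by apply: bfam_mul; [apply: bfam_nil | exists B].
- by move=> k; rewrite det_mulmx hdet mulr1; apply: Dec_nil_det.
- move=> k; rewrite sumDL_E h00 big1 ?addr0 // => l hl.
  by rewrite /a eq_sym (negPf hl) mul0r mulr0.
- move=> k i hi; rewrite sumDL_E (bigD1 i) //= big1 ?addr0.
    by rewrite /a /b /c eqxx h00 !mulr1 addrN.
  by move=> l /andP [_ hl]; rewrite /a eq_sym (negPf hl) mul0r mulr0.
Qed.

Lemma stage_b n (IH : forall N : nat -> 'M[F]_n.+1, bfam N -> (forall k, \det (N k) = 1) -> Dec N)
  (M : nat -> 'M[F]_n.+2) (d : F) : 0 < d -> bfam M -> (forall k, \det (M k) = 1) ->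
  (forall k, d <= `|M k ord0 ord0|) -> Dec M.
Proof.
move=> d0 [B hB] hdet hd.
pose i1 := lift ord0 (ord0 : 'I_n.+1).
have i10 : i1 != ord0 by rewrite /i1 lnz0.
have M00 : forall k, M k ord0 ord0 != 0.
  move=> k; apply/negP => /eqP h; have := hd k; rewrite h normr0.
  by rewrite (lt_geF d0).
pose cA := fun k => (1 - M k i1 ord0) / M k ord0 ord0.
have bA : bseq cA.
  exists ((1 + B) * d^-1) => k; rewrite /cA normrM normfV.
  have hk : 0 < `|M k ord0 ord0| := lt_le_trans d0 (hd k).
  apply: ler_pM; rewrite ?invr_ge0 ?normr_ge0 //.
    by rewrite (le_trans (ler_normB _ _)) // normr1 lerD ?hB ?lexx.
  by rewrite lef_pV2 ?hd // ?posrE.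

pose cB := fun k => 1 - M k ord0 ord0.
have bB : bseq cB.
  by exists (1 + B) => k; rewrite /cB (le_trans (ler_normB _ _)) // normr1 lerD ?hB ?lexx.
apply: (Dec_elemL i10 bA).
have i01 : ord0 != i1 by rewrite eq_sym.
apply: (Dec_elemL i01 bB).
apply: (stage_c IH).
- apply: bfam_mul; first exact: bfam_elem.
  by apply: bfam_mul; [apply: bfam_elem | exists B].
- by move=> k; rewrite !det_mulmx !det_elem ?hdet ?mulr1 // eq_sym.
- move=> k; rewrite elemL_E eqxx mul1r !elemL_E eqxx mul1r.
  rewrite (eq_sym ord0 i1) (negPf i10) /= !mul0r addr0 /cA divfK ?M00 // /cB.
  ring.
Qed.

Lemma stage_a n (IH : forall N : nat -> 'M[F]_n.+1, bfam N -> (forall k, \det (N k) = 1) -> Dec N)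
  (M : nat -> 'M[F]_n.+2) : bfam M -> (forall k, \det (M k) = 1) -> Dec M.
Proof.
move=> [B hB] hdet.
have B0 : 0 <= B := le_trans (normr_ge0 _) (hB 0%N ord0 ord0).
have [d d0 hd] := pivot_lb n.+1 B0.
pose g := fun k => odflt ord0 [pick i | d <= `|M k i ord0| ].
have hg : forall k, d <= `|M k (g k) ord0|.
  move=> k; rewrite /g; case: pickP => [i -> //|/= h].
  by have [i hi] := hd _ (hB k) (hdet k); rewrite h in hi.
pose h := d / 2%:R.
have h0 : 0 < h by rewrite divr_gt0 ?ltr0n.
have dh : d = h + h by rewrite /h -splitr.
pose sm := fun k => `|M k ord0 ord0| < h.
pose P := (fun j : 'I_n.+2 => j != ord0).
pose a := (fun _ : 'I_n.+2 => (ord0 : 'I_n.+2)).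
pose b := (fun j : 'I_n.+2 => j).
pose c := (fun j k => if sm k && (j == g k) then (1 : F) else 0).
have h1 : forall i, P i -> a i != b i by move=> i; rewrite /P /a /b eq_sym.
have h2 : exists B, forall i k, `|c i k| <= B.
  by exists 1 => i k; rewrite /c; case: (_ && _); rewrite ?normr1 ?normr0 ?ler01.
have h3 : forall i i', P i -> P i' -> b i != a i' by [].
apply: (Dec_nilL h1 h2 h3); apply: (stage_b IH h0).
- by apply: bfam_mul; [apply: bfam_nil | exists B].
- by move=> k; rewrite det_mulmx hdet mulr1; apply: Dec_nil_det.
- move=> k; rewrite sumDL_E.
  case hs: (sm k).
  + have g0 : g k != ord0.
      apply/negP => /eqP e; have := hg k; rewrite e => hh.
      have : d < h := le_lt_trans hh hs.
      rewrite dh -{3}(addr0 h) ltrD2l => /(lt_trans h0); by rewrite ltxx.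
    rewrite (bigD1 (g k)) //= big1 ?addr0.
      rewrite /c hs eqxx /a /b /= !mul1r addrC.
      apply: le_trans (lerB_normD _ _).
      have -> : h = d - h by rewrite dh addrK.
      by apply: lerB => //; exact: ltW.
    by move=> l /andP [_ hl]; rewrite /c hs /= (negPf hl) mul0r.
  + rewrite big1 ?addr0.
      by rewrite real_leNgt ?normr_real ?gtr0_real //; move: hs; rewrite /sm => ->.
    by move=> l _; rewrite /c hs mul0r.
Qed.

Theorem core n (M : nat -> 'M[F]_n) : bfam M -> (forall k, \det (M k) = 1) -> Dec M.
Proof.
elim: n M => [|n IH] M hb hd.
  apply: (Dec_ext (N := fun _ => 1%:M)); last exact: Dec1.
  by move=> k; apply/matrixP => -[].
case: n IH M hb hd => [|n] IH M hb hd.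
  apply: (Dec_ext (N := fun _ => 1%:M)); last exact: Dec1.
  move=> k; apply/matrixP => i j; rewrite (ord1 i) (ord1 j) mxE /= mulr1n.
  by rewrite -det_mx11 hd.
exact: stage_a.
Qed.

End CoreS.

Section Ana.
Local Open Scope classical_set_scope.
Local Open Scope ring_scope.
Local Open Scope complex_scope.
Variable R : realType.
Local Notation C := (R[i]).
Variable p : nat -> R.
Hypothesis p_pos : forall n, 0 < p n.

Definition phi k (f : nat -> C) : C := (p k)%:C * f k.

Lemma pC0 k : (p k)%:C != 0 :> C.
Proof. by rewrite eq_complex /= negb_and (gt_eqF (p_pos k)). Qed.

Lemma normpC k : `|(p k)%:C| = (p k)%:C :> C.
Proof. by rewrite ger0_norm // ler0c ltW. Qed.

Lemma phi_add k f g : phi k (hadd f g) = phi k f + phi k g.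
Proof. by rewrite /phi /hadd mulrDr. Qed.
Lemma phi_zero k : phi k (@hzero R) = 0.
Proof. by rewrite /phi /hzero mulr0. Qed.
Lemma phi_mul k f g : phi k (hmul p f g) = phi k f * phi k g.
Proof. rewrite /phi /hmul; ring. Qed.
Lemma phi_eps k : phi k (eps p) = 1.
Proof. by rewrite /phi /eps -rmorphM mulfV ?(gt_eqF (p_pos k)). Qed.
Lemma phi_scale k c f : phi k (hscale c f) = c * phi k f.
Proof. by rewrite /phi /hscale mulrCA. Qed.

Lemma phi_inj k f g : phi k f = phi k g -> f k = g k.
Proof. by move/(mulfI (pC0 k)). Qed.

Definition famA n (A : hmat R n) : nat -> 'M[C]_n := fun k => \matrix_(i, j) phi k (A i j).

Lemma phi_hdet n (A : hmat R n) k : phi k (hdet p A) = \det (famA A k).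
Proof.
rewrite /hdet (big_morph (phi k) (phi_add k) (phi_zero k)).
apply: eq_bigr => s _; rewrite phi_scale (big_morph (phi k) (phi_mul k) (phi_eps k)).
by congr (_ * _); apply: eq_bigr => i _; rewrite mxE.
Qed.

Lemma phi_hmulmx n (X Y : hmat R n) k i j :
  phi k (hmulmx p X Y i j) = \sum_l phi k (X i l) * phi k (Y l j).
Proof.
rewrite /hmulmx (big_morph (phi k) (phi_add k) (phi_zero k)).
by apply: eq_bigr => l _; rewrite phi_mul.
Qed.

Definition conv n (e : 'I_n * 'I_n * (nat -> C)) : 'I_n * 'I_n * (nat -> C) :=
  (e.1.1, e.1.2, fun k => e.2 k / (p k)%:C).

Lemma phi_foldr n (es : seq ('I_n * 'I_n * (nat -> C))) k i j :
  phi k ((foldr (fun e M => hmulmx p (helem p e.1.1 e.1.2 e.2) M) (@hId R p n) (map (@conv n) es)) i j)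
  = prodE es k i j.
Proof.
elim: es i j => [|e es IH] i j /=.
  rewrite /prodE /= mxE /hId; case: (i == j); rewrite ?phi_eps //.
  by rewrite phi_zero.
rewrite phi_hmulmx /prodE /= -/(prodE _ _) mxE; apply: eq_bigr => l _.
rewrite IH; congr (_ * _).
rewrite /helem phi_add phi_mul /elemmx !mxE /hId /hE /conv /=.
case: (i == l); case: (_ && _); rewrite ?phi_eps ?phi_zero ?mulr0 ?mulr1 //=.
all: by rewrite ?add0r /phi mulrC divfK ?pC0.
Qed.


Lemma bfam_famA n (A : hmat R n) : (forall i j, inA p (A i j)) -> bfam (famA A).
Proof.
move=> hA.
have : forall x : 'I_n * 'I_n, exists M : R, forall k, (p k)%:C * `|A x.1 x.2 k| <= M%:C.
  by move=> x; case: (hA x.1 x.2) => _ [M hM]; exists M.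
move/choice => [bnd hbnd].
exists ((\sum_x `|bnd x|)%:C) => k i j.
rewrite mxE /phi normrM normpC (le_trans (hbnd (i,j) k)) // lecR.
rewrite (le_trans (ler_norm _)) // (bigD1 (i,j)) //= lerDl sumr_ge0 //.
Qed.

Lemma inA_conv (c : nat -> C) (B : C) :
  (fun n : nat => p n `^ (n%:R)^-1) @ \oo --> +oo ->
  (forall k, `|c k| <= B) -> inA p (fun k => c k / (p k)%:C).
Proof.
move=> proot hB.
have B0 : 0 <= B := le_trans (normr_ge0 _) (hB 0%N).
set Br := complex.Re B; have eB : B = Br%:C by rewrite RRe_real ?ger0_real.
have hn k : `|c k / (p k)%:C| = `|c k| / (p k)%:C by rewrite normrM normfV normpC.
split; last first.
  exists Br => k; rewrite hn mulrCA mulfV ?pC0 ?mulr1 -?eB //.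
move=> r r0.
move/cvgryPge: proot => /(_ r) [N _ hN].
pose T k := `|c k / (p k)%:C| * (r ^+ k)%:C.
have T0 k : 0 <= T k by rewrite mulr_ge0 // ler0c exprn_ge0 // ltW.
have Tbig k : (N.+1 <= k)%N -> T k <= B.
  move=> hk.
  have rk : r ^+ k <= p k.
    have h : r <= p k `^ (k%:R)^-1 := hN k (ltnW hk).
    have := lerXn2r k (ltW r0) (powR_ge0 _ _) h.
    rewrite -(@powR_mulrn _ (p k `^ (k%:R)^-1) k (powR_ge0 _ _)) -powRrM mulVf.
      by rewrite powRr1 // ltW.
    by rewrite pnatr_eq0 -lt0n (leq_trans _ hk).
  rewrite /T hn -mulrA -[X in _ <= X]mulr1 ler_pM //.
    by rewrite mulr_ge0 // ?invr_ge0 ler0c ?exprn_ge0 // ltW.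
  by rewrite mulrC ler_pdivrMr ?ltcR // mul1r lecR.
exists (complex.Re (B + \sum_(l < N.+1) T l)) => k.
rewrite RRe_real ?ger0_real ?addr_ge0 ?sumr_ge0 //.
case: (ltnP k N.+1) => hk.
  rewrite -/(T k) -[T k]add0r lerD //.
  by rewrite (bigD1 (Ordinal hk)) //= lerDl sumr_ge0.
by rewrite (le_trans (Tbig k hk)) // lerDl sumr_ge0.
Qed.

End Ana.


Unset Implicit Arguments.
Local Open Scope classical_set_scope.
Local Open Scope ring_scope.

Theorem mainTheorem19 (R : realType) (p : nat -> R)
  (p_pos : forall n, 0 < p n)
  (p_root : (fun n : nat => p n `^ (n%:R)^-1) @ \oo --> +oo)
  (n : nat) (A : hmat R n) :
  inSLn p A -> inElem p A.
Proof.
move=> [hA hdet].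
have hb := bfam_famA p_pos hA.
have hd : forall k, \det (famA p A k) = 1.
  by move=> k; rewrite -(phi_hdet p_pos) hdet (phi_eps p_pos).
have [es [hok heq]] := core hb hd.
exists (map (@conv R p n) es); split.
  move=> e /List.in_map_iff [e' [<- he']]; case: (hok e' he') => ne [B hB].
  by split => //; apply: (inA_conv p_pos p_root hB).
apply: funext => i; apply: funext => j; apply: funext => k.
apply: (phi_inj p_pos); rewrite (phi_foldr p_pos) -heq mxE.
by [].
Qed.
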